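(* Let $G=G_1\,\Box\,\cdots\,\Box\,G_D$ be a cartesian product of cycle digraphs $C_{n}$ ($n\ge3$) and simple directed paths $P_n$ ($n\ge2$). Let $c_{\mathrm{even}}$ be the number of factors that are cycle digraphs with an even number of vertices. Then $$\frac{\dim\ker\mathcal D(G)}{r}=\begin{cases}2^{c_{\mathrm{even}}}&\text{if no factor is a simple directed path with an even number of vertices},\\ 0&\text{otherwise.}\end{cases}$$ In particular, if no factor is a path with an even number of vertices, then $\dim\ker\mathcal D(G)\ge r$.
   Context: The cycle digraph $C_n$ has vertex set $\{1,\dots,n\}$ and edges $i\to i+1$ for $1\le i\le n-1$ together with $n\to1$. The simple directed path $P_n$ has vertex set $\{1,\dots,n\}$ and edges $i\to i+1$ for $1\le i\le n-1$. For a directed graph without multiple edges, the anti-symmetrized adjacency matrix $A_{\mathrm{as}}$ is the $|V|\times|V|$ matrix with: - $(A_{\mathrm{as}})_{ij}=1$ if an edge leaves $i$ and enters $j$; - $(A_{\mathrm{as}})_{ij}=-1$ if an edge leaves $j$ and enters $i$; - $(A_{\mathrm{as}})_{ij}=0$ otherwise. Let $\gamma_1,\dots,\gamma_D$ be complex $r\times r$ matrices satisfying $\gamma_\mu\gamma_\nu+\gamma_\nu\gamma_\mu=2\delta_{\mu\nu}\mathbf 1_r$. For $G_\mu$ with $n_\mu$ vertices, define $$\mathcal D(G)=\sum_{\mu=1}^D\Big(\mathbf 1_{n_D}\otimes\cdots\otimes\mathbf 1_{n_{\mu+1}}\otimes A_{\mathrm{as}}(G_\mu)\otimes\mathbf 1_{n_{\mu-1}}\otimes\cdots\otimes\mathbf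 1_{n_1}\Big)\otimes\gamma_\mu,$$ where $\otimes$ is the Kronecker product and $\mathbf 1_k$ is the $k\times k$ identity. *)

(* Defs.v *)
From HB Require Import structures.
From mathcomp Require Import all_boot all_order all_algebra.
From mathcomp Require Import complex mxtens.
From mathcomp Require Import reals.

Set Implicit Arguments.
Unset Strict Implicit.
Unset Printing Implicit Defensive.

Import Order.TTheory GRing.Theory Num.Theory.
Local Open Scope ring_scope.

(* A factor of the cartesian product: a cycle digraph C_n or a simple
   directed path P_n.  Vertices {1,..,n} are encoded as 'I_n = {0,..,n-1}
   (vertex k+1 of the paper is the ordinal k). *)
Inductive factor := Cyc of nat | Pth of nat.

Definition nverts (f : factor) : nat :=
  match f with Cyc n => n | Pth n => n end.

Definition fedge (f : factor) (i j : 'I_(nverts f)) : bool :=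
  match f with
  | Cyc n => (j == (i.+1 %% n)%N :> nat)
  | Pth n => (j == i.+1 :> nat)
  end.

Definition Aas (C : nzRingType) (n : nat) (e : rel 'I_n) : 'M[C]_n :=
  \matrix_(i, j) (if e i j then 1 else if e j i then -1 else 0).

Fixpoint kron_size (D : nat) (n : 'I_D -> nat) (l : seq 'I_D) : nat :=
  match l with [::] => 1%N | nu :: l' => (n nu * kron_size n l')%N end.

Fixpoint kron (C : nzRingType) (D : nat) (n : 'I_D -> nat)
    (M : forall nu : 'I_D, 'M[C]_(n nu)) (l : seq 'I_D) : 'M[C]_(kron_size n l) :=
  match l return 'M[C]_(kron_size n l) with
  | [::] => 1%:M
  | nu :: l' => M nu *t kron M l'
  end.

(* The Kronecker
   factors are ordered  1_{n_D} (x) ... (x) A_as(G_mu) (x) ... (x) 1_{n_1}. *)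
Definition Dop (C : nzRingType) (D r : nat) (G : 'I_D -> factor)
    (gam : 'I_D -> 'M[C]_r) :
    'M[C]_(kron_size (fun nu => nverts (G nu)) (rev (enum 'I_D)) * r) :=
  \sum_(mu < D)
    (kron (fun nu : 'I_D =>
             if nu == mu then @Aas C _ (@fedge (G nu)) else (1%:M : 'M[C]_(nverts (G nu))))
          (rev (enum 'I_D))) *t gam mu.

(* dimension of the kernel {v | A v = 0} of a matrix acting on column vectors *)
Definition dimker (F : fieldType) (m n : nat) (A : 'M[F]_(m, n)) : nat :=
  \rank (kermx A^T).

Definition valid_factor (f : factor) : bool :=
  match f with Cyc n => (3 <= n)%N | Pth n => (2 <= n)%N end.

Definition is_even_cycle (f : factor) : bool :=
  match f with Cyc n => ~~ odd n | Pth _ => false end.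

Definition is_even_path (f : factor) : bool :=
  match f with Pth n => ~~ odd n | Cyc _ => false end.

Definition clifford (C : nzRingType) (D r : nat) (gam : 'I_D -> 'M[C]_r) : Prop :=
  forall mu nu : 'I_D,
    gam mu *m gam nu + gam nu *m gam mu = (if mu == nu then 2 else 0)%:M.

(* Main.v *)
Require Import Defs.
From HB Require Import structures.
From mathcomp Require Import all_boot all_order all_algebra.
From mathcomp Require Import complex mxtens.
From mathcomp Require Import reals.
From mathcomp Require Import zify.

Import Order.TTheory GRing.Theory Num.Theory.
Local Open Scope ring_scope.

Set Implicit Arguments.
Unset Strict Implicit.
Unset Printing Implicit Defensive.

Section Tens.
Variable F : fieldType.

Lemma tens11 m n : (1%:M : 'M[F]_m) *t (1%:M : 'M[F]_n) = 1%:M.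
Proof.
apply/matrixP=> i j; case: (mxtens_indexP i)=> i0 i1; case: (mxtens_indexP j)=> j0 j1.
rewrite tensmxE !mxE (can_eq (@mxtens_indexK _ _)) xpair_eqE.
by case: (i0 == j0); case: (i1 == j1); rewrite /= ?mulr1 ?mulr0.
Qed.

Lemma tensmxDl m n p q (A B : 'M[F]_(m,n)) (M : 'M[F]_(p,q)) :
  (A + B) *t M = A *t M + B *t M.
Proof. by apply/matrixP=> i j; rewrite !mxE mulrDl. Qed.
Lemma tensmxDr m n p q (A B : 'M[F]_(m,n)) (M : 'M[F]_(p,q)) :
  M *t (A + B) = M *t A + M *t B.
Proof. by apply/matrixP=> i j; rewrite !mxE mulrDr. Qed.
Lemma tensmxZl m n p q c (A : 'M[F]_(m,n)) (M : 'M[F]_(p,q)) :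
  (c *: A) *t M = c *: (A *t M).
Proof. by apply/matrixP=> i j; rewrite !mxE mulrA. Qed.
Lemma tensmxZr m n p q c (A : 'M[F]_(m,n)) (M : 'M[F]_(p,q)) :
  M *t (c *: A) = c *: (M *t A).
Proof. by apply/matrixP=> i j; rewrite !mxE mulrCA. Qed.
Lemma tensmxNl m n p q (A : 'M[F]_(m,n)) (M : 'M[F]_(p,q)) :
  (- A) *t M = - (A *t M).
Proof. by apply/matrixP=> i j; rewrite !mxE mulNr. Qed.
Lemma tensmx_suml m n p q (I : finType) (A : I -> 'M[F]_(m,n)) (M : 'M[F]_(p,q)) :
  (\sum_i A i) *t M = \sum_i (A i *t M).
Proof.
apply: (big_ind2 (fun x y => x *t M = y)); first by rewrite tens0mx.
  by move=> x1 y1 x2 y2 <- <-; rewrite tensmxDl.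
by [].
Qed.

Lemma rank_tens m n p q (A : 'M[F]_(m,n)) (B : 'M[F]_(p,q)) :
  \rank (A *t B) = (\rank A * \rank B)%N.
Proof.
apply/eqP; rewrite eqn_leq; apply/andP; split.
  rewrite -[A in A *t B](mulmx_base A) -[B in _ *t B](mulmx_base B) -tensmx_mul.
  apply: leq_trans (mxrankM_maxl _ _) _; exact: rank_leq_col.
have /row_fullP[LA HLA] := col_base_full A.
have /row_fullP[LB HLB] := col_base_full B.
have /row_freeP[RA HRA] := row_base_free A.
have /row_freeP[RB HRB] := row_base_free B.
have E : (LA *t LB) *m ((col_base A *m row_base A) *t (col_base B *m row_base B))
    *m (RA *t RB) = 1%:M.
  rewrite !tensmx_mul [LA *m (_ *m _)]mulmxA [LB *m (_ *m _)]mulmxA HLA HLB !mul1mx.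
  by rewrite HRA HRB tens11.
rewrite !mulmx_base in E.
have := mxrank1 F (\rank A * \rank B); rewrite -{1}E => <-.
apply: leq_trans (mxrankM_maxl _ _) _; exact: mxrankM_maxr.
Qed.
End Tens.

Section Kron.
Variables (F : fieldType) (D : nat) (n : 'I_D -> nat).
Implicit Types (M : forall nu, 'M[F]_(n nu)) (l : seq 'I_D).

Lemma kron_mul M M' l : kron M l *m kron M' l = kron (fun nu => M nu *m M' nu) l.
Proof. by elim: l => [|nu l IH] /=; rewrite ?mul1mx // tensmx_mul IH. Qed.

Lemma eq_kron M M' l : (forall nu, nu \in l -> M nu = M' nu) -> kron M l = kron M' l.
Proof.
elim: l => [|nu l IH] //= H; rewrite H ?mem_head // IH // => mu Hmu.
by apply: H; rewrite in_cons Hmu orbT.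
Qed.

Lemma kron1 l : kron (fun nu => (1%:M : 'M[F]_(n nu))) l = 1%:M.
Proof. by elim: l => [|nu l IH] //=; rewrite IH tens11. Qed.

Lemma kron0 M l mu : mu \in l -> M mu = 0 -> kron M l = 0.
Proof.
elim: l => [|nu l IH] //=; rewrite in_cons => /orP[/eqP <- ->|Hmu H0].
  by rewrite tens0mx.
by rewrite IH // tensmx0.
Qed.

Lemma kron_tr M l : (kron M l)^T = kron (fun nu => (M nu)^T) l.
Proof. by elim: l => [|nu l IH] /=; rewrite ?tr_scalar_mx // trmx_tens IH. Qed.

Lemma kron_map (f : {rmorphism F -> F}) M l :
  map_mx f (kron M l) = kron (fun nu => map_mx f (M nu)) l.
Proof. by elim: l => [|nu l IH] /=; rewrite ?map_scalar_mx ?rmorph1 // map_mxT IH. Qed.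

Lemma kron_rank M l : \rank (kron M l) = \prod_(nu <- l) \rank (M nu).
Proof.
elim: l => [|nu l IH] /=; first by rewrite big_nil mxrank1.
by rewrite rank_tens IH big_cons.
Qed.

Definition upd (mu : 'I_D) M : forall nu, 'M[F]_(n nu) :=
  fun nu => if nu == mu then M nu else 1%:M.

Lemma kron_upd_out M l mu : mu \notin l -> kron (upd mu M) l = 1%:M.
Proof.
move=> Hmu; rewrite -(kron1 l); apply: eq_kron => nu Hnu.
by rewrite /upd; case: eqP => // E; rewrite -E Hnu in Hmu.
Qed.

Lemma kron_updZ c M l mu : uniq l -> mu \in l ->
  kron (upd mu (fun nu => c *: M nu)) l = c *: kron (upd mu M) l.
Proof.
elim: l => [|nu l IH] //= /andP[Hnu Hu]; rewrite in_cons.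
case: (eqVneq nu mu) => [E _|Ne /= Hmu].
  subst nu; rewrite /upd eqxx -/(upd mu _) -/(upd mu M).
  by rewrite !kron_upd_out // tensmxZl.
by rewrite /upd (negbTE Ne) -/(upd mu _) -/(upd mu M) IH // tensmxZr.
Qed.

Lemma kron_updD M M' l mu : uniq l -> mu \in l ->
  kron (upd mu (fun nu => M nu + M' nu)) l = kron (upd mu M) l + kron (upd mu M') l.
Proof.
elim: l => [|nu l IH] //= /andP[Hnu Hu]; rewrite in_cons.
case: (eqVneq nu mu) => [E _|Ne /= Hmu].
  subst nu; rewrite /upd eqxx -/(upd mu _) -/(upd mu M) -/(upd mu M').
  by rewrite !kron_upd_out // tensmxDl.
by rewrite /upd (negbTE Ne) -/(upd mu _) -/(upd mu M) -/(upd mu M') IH // tensmxDr.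
Qed.
End Kron.

Section Pos.
Variable C : numClosedFieldType.
Local Notation cj := (map_mx (@Num.conj C)).

Lemma pos_ker k N (I : finType) (B : I -> 'M[C]_N) (K : 'M[C]_(k, N)) :
  (forall i, (B i)^T = - B i) -> (forall i, cj (B i) = B i) ->
  K *m (\sum_i B i *m B i) = 0 -> forall i, K *m B i = 0.
Proof.
move=> Ha Hr H0 i0; apply/row_matrixP => j; rewrite row_mul row0.
set u := row j K.
have Hu : u *m (\sum_i B i *m B i) = 0 by rewrite /u -row_mul H0 row0.
pose w i := u *m B i.
have Hw i : w i *m (cj (w i))^T = - (u *m (B i *m B i) *m (cj u)^T).
  rewrite /w (map_mxM Num.Def.conjC) Hr trmx_mul Ha mulNmx mulmxN.
  by rewrite !mulmxA.
have Hs : \sum_i w i *m (cj (w i))^T = 0.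
  under eq_bigr do rewrite Hw.
  by rewrite sumrN -mulmx_suml -mulmx_sumr Hu mul0mx oppr0.
have := congr1 (fun M : 'M[C]_1 => M 0 0) Hs; rewrite summxE mxE => Hsum.
have : \sum_i \sum_l (w i 0 l * (w i 0 l)^* ) == 0.
  apply/eqP; rewrite -[RHS]Hsum; apply: eq_bigr => i _; rewrite mxE.
  by apply: eq_bigr => l _; rewrite !mxE.
rewrite psumr_eq0 => [/allP Hall|i _]; last first.
  by apply: sumr_ge0 => l _; rewrite mul_conjC_ge0.
apply/rowP => l; rewrite !mxE.
have := Hall i0 (mem_index_enum _); rewrite /= psumr_eq0 => [|l' _]; last first.
  by rewrite mul_conjC_ge0.
move=> /allP /(_ l (mem_index_enum _)) /=; rewrite mul_conjC_eq0.
by move=> /eqP; rewrite /w mxE.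
Qed.
End Pos.

Section Gen.
Variables (C : numClosedFieldType) (D r : nat) (n : 'I_D -> nat).
Variables (a : forall nu, 'M[C]_(n nu)) (h : 'I_D -> 'M[C]_r) (l : seq 'I_D).
Hypothesis Hl : uniq l.
Hypothesis Hall : forall mu, mu \in l.
Hypothesis Ha : forall nu, (a nu)^T = - a nu.
Hypothesis Hr : forall nu, map_mx (@Num.conj C) (a nu) = a nu.
Hypothesis Hc : clifford h.

Let Am mu := kron (upd mu a) l.
Let X := \sum_mu Am mu *t h mu.
Let P nu : 'M[C]_(n nu) := 1%:M - a nu *m pinvmx (a nu).

Lemma Am_comm mu nu : Am mu *m Am nu = Am nu *m Am mu.
Proof.
rewrite /Am !kron_mul; apply: eq_kron => k _; rewrite /upd.
by case: (k == mu); case: (k == nu); rewrite ?mul1mx ?mulmx1.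
Qed.

Lemma Am_tr mu : (Am mu)^T = - Am mu.
Proof.
rewrite /Am kron_tr.
rewrite (@eq_kron _ _ _ _ (upd mu (fun k => (-1) *: a k))); last first.
  by move=> k _; rewrite /upd; case: eqP => _; rewrite ?tr_scalar_mx // Ha scaleN1r.
by rewrite kron_updZ // scaleN1r.
Qed.

Lemma Am_re mu : map_mx (@Num.conj C) (Am mu) = Am mu.
Proof.
rewrite /Am (kron_map Num.Def.conjC); apply: eq_kron => k _; rewrite /upd.
by case: eqP => _; rewrite ?Hr // map_scalar_mx rmorph1.
Qed.

Lemma P_a nu : P nu *m a nu = 0.
Proof. by rewrite /P mulmxBl mul1mx mulmxKpV ?subrr. Qed.

Lemma Ptot_Am mu : kron P l *m Am mu = 0.
Proof. by rewrite /Am kron_mul (@kron0 _ _ _ _ _ mu) // /upd eqxx P_a. Qed.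

Lemma XX : X *m X = \sum_mu (Am mu *t 1%:M) *m (Am mu *t 1%:M).
Proof.
have E1 : X *m X = \sum_mu \sum_nu (Am mu *m Am nu) *t (h mu *m h nu).
  rewrite /X mulmx_suml; apply: eq_bigr => mu _; rewrite mulmx_sumr.
  by apply: eq_bigr => nu _; rewrite tensmx_mul.
have two0 : (2 : C) != 0 by rewrite pnatr_eq0.
apply: (scalerI two0).
rewrite scaler_nat mulr2n {2}E1 exchange_big /= E1 -big_split /=.
rewrite scaler_sumr; apply: eq_bigr => mu _.
rewrite -big_split /=.
rewrite (eq_bigr (fun nu => (Am mu *m Am nu) *t (if mu == nu then 2 else 0)%:M)); last first.
  by move=> nu _; rewrite (Am_comm nu mu) -tensmxDr Hc.
rewrite (bigD1 mu) //= eqxx big1 ?addr0; last first.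
  by move=> nu /negbTE; rewrite eq_sym => ->; rewrite -scalemx1 scale0r tensmx0.
by rewrite tensmx_mul mulmx1 -tensmxZr scalemx1.
Qed.

Lemma rankP nu : \rank (P nu) = \rank (kermx (a nu)).
Proof.
apply/eqP; rewrite eqn_leq; apply/andP; split; apply: mxrankS.
  by apply/sub_kermxP; rewrite P_a.
have -> : kermx (a nu) = kermx (a nu) *m P nu.
  by rewrite /P mulmxBr mulmx1 mulmxA mulmx_ker mul0mx subr0.
exact: submxMl.
Qed.

Theorem gen_rank : \rank (kermx X) = (\prod_(nu <- l) \rank (kermx (a nu)) * r)%N.
Proof.
set K := kermx X.
have HK : K *m X = 0 by exact: mulmx_ker.
have HKB : forall mu, K *m (Am mu *t 1%:M) = 0.
  apply: pos_ker.
  - by move=> mu; rewrite trmx_tens Am_tr tr_scalar_mx tensmxNl.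
  - move=> mu; rewrite (map_mxT Num.Def.conjC) map_scalar_mx rmorph1.
    by congr (_ *t _); exact: Am_re.
  - by rewrite -XX mulmxA HK mul0mx.
have HKP : forall mu, K *m (kron (upd mu P) l *t 1%:M) = K.
  move=> mu.
  pose Q := kron (upd mu (fun k => pinvmx (a k))) l.
  have E2 : Am mu *m Q = kron (upd mu (fun k => a k *m pinvmx (a k))) l.
    rewrite /Am /Q kron_mul; apply: eq_kron => k _.
    by rewrite /upd; case: eqP; rewrite ?mulmx1.
  have EQ : kron (upd mu P) l = 1%:M - Am mu *m Q.
    rewrite E2 (@eq_kron _ _ _ _ (upd mu (fun k => 1%:M + (-1) *: (a k *m pinvmx (a k))))); last first.
      by move=> k _; rewrite /upd /P scaleN1r.
    rewrite kron_updD // kron_updZ // scaleN1r.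
    congr (_ - _); rewrite -(@kron1 _ _ n l); apply: eq_kron => k _.
    by rewrite /upd; case: eqP.
  rewrite EQ tensmxDl tensmxNl tens11 mulmxDr mulmx1 mulmxN.
  have -> : (Am mu *m Q) *t (1%:M : 'M[C]_r) = (Am mu *t 1%:M) *m (Q *t 1%:M).
    by rewrite tensmx_mul mulmx1.
  by rewrite mulmxA HKB mul0mx oppr0 addr0.
have HKs : forall s, uniq s ->
    K *m (kron (fun k => if k \in s then P k else 1%:M) l *t 1%:M) = K.
  elim => [|mu s IH] /=.
    move=> _; rewrite (@eq_kron _ _ _ _ (fun k => 1%:M)) // kron1 tens11.
    exact: mulmx1.
  move=> /andP[Hmu Hs].
  rewrite (@eq_kron _ _ _ _ (fun k => upd mu P k *m (if k \in s then P k else 1%:M))); last first.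
    move=> k _; rewrite /upd in_cons; case: (eqVneq k mu) => [->|_] /=.
      by rewrite (negbTE Hmu) mulmx1.
    by rewrite mul1mx.
  rewrite -kron_mul.
  rewrite -[(1%:M : 'M[C]_r)]mulmx1 -tensmx_mul mulmxA HKP.
  exact: IH.
have HKt : K *m (kron P l *t 1%:M) = K.
  rewrite -[in RHS](HKs l Hl); congr (_ *m (_ *t _)); apply: eq_kron => k Hk.
  by rewrite Hk.
have S1 : (K <= kron P l *t 1%:M)%MS by rewrite -HKt submxMl.
have S2 : (kron P l *t (1%:M : 'M[C]_r) <= K)%MS.
  apply/sub_kermxP; rewrite /X mulmx_sumr big1 // => mu _.
  by rewrite tensmx_mul Ptot_Am tens0mx.
have -> : \rank K = \rank (kron P l *t (1%:M : 'M[C]_r)).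
  by apply/eqP; rewrite eqn_leq !mxrankS.
rewrite rank_tens mxrank1 kron_rank; congr (_ * _)%N.
by apply: eq_bigr => nu _; rewrite rankP.
Qed.
End Gen.

Section Conc.
Variable F : fieldType.

Definition Uv n (u : 'rV[F]_n) (k : nat) : F := \sum_(i < n) ((i:nat) == k)%:R * u 0 i.

Lemma Uv_lt n (u : 'rV[F]_n) k (H : (k < n)%N) : Uv u k = u 0 (Ordinal H).
Proof.
rewrite /Uv (bigD1 (Ordinal H)) //= eqxx mul1r big1 ?addr0 // => i ne.
by rewrite (_ : (i:nat) == k = false) ?mul0r //; apply/negbTE; rewrite -val_eqE /= in ne.
Qed.

Lemma Uv_out n (u : 'rV[F]_n) k : (n <= k)%N -> Uv u k = 0.
Proof.
move=> H; rewrite /Uv big1 // => i _.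
by rewrite (_ : (i:nat) == k = false) ?mul0r //; apply/negbTE; apply/eqP => E; move: (ltn_ord i); lia.
Qed.

Lemma Uv_row n (g : nat -> F) k : Uv (\row_(j < n) g j) k = if (k < n)%N then g k else 0.
Proof. by case: ltnP => H; [rewrite (Uv_lt _ H) mxE | rewrite Uv_out]. Qed.

Lemma mulU n (u : 'rV[F]_n) (a : 'M[F]_n) j k1 k2 :
  (forall i, a i j = ((i:nat) == k1)%:R - ((i:nat) == k2)%:R) ->
  (u *m a) 0 j = Uv u k1 - Uv u k2.
Proof.
move=> H; rewrite mxE /Uv -sumrB; apply: eq_bigr => i _.
by rewrite H mulrBr !(mulrC (u 0 i)).
Qed.

Lemma ker_rank_gen n (a : 'M[F]_n) m (V : 'M[F]_(m, n)) :
  (forall u : 'rV_n, u *m a = 0 -> (u <= V)%MS) -> V *m a = 0 ->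
  \rank (kermx a) = \rank V.
Proof.
move=> H1 H2; apply/eqP; rewrite eqn_leq !mxrankS //.
  exact/sub_kermxP.
by apply/row_subP => i; apply: H1; rewrite -row_mul mulmx_ker row0.
Qed.

Lemma modS (n i : nat) : (i < n)%N -> (i.+1 %% n = if i.+1 == n then 0 else i.+1)%N.
Proof. move=> H; case: eqP => [->|ne]; first by rewrite modnn. by rewrite modn_small; lia. Qed.

Definition cpred n (j : nat) := if j == 0%N then (n - 1)%N else (j - 1)%N.
Definition csucc n (j : nat) := if j.+1 == n then 0%N else j.+1.
Definition ppred n (j : nat) := if j == 0%N then n else (j - 1)%N.

Lemma cyc_entry n (H : (3 <= n)%N) (i j : 'I_n) :
  @Aas F (nverts (Cyc n)) (fedge (f:=Cyc n)) i j
  = ((i:nat) == cpred n j)%:R - ((i:nat) == csucc n j)%:R.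
Proof.
rewrite mxE /fedge /cpred /csucc !modS //.
have Hi := ltn_ord i; have Hj := ltn_ord j.
case: (i.+1 =P n); intro; case: (j.+1 =P n); intro; case: (nat_of_ord j =P 0%N); intro; do ![case: eqP; intro]; rewrite /= ?mulr0n ?mulr1n ?subr0 ?sub0r //; exfalso; simpl in *; lia.
Qed.

Lemma pth_entry n (i j : 'I_n) :
  @Aas F (nverts (Pth n)) (fedge (f:=Pth n)) i j
  = ((i:nat) == ppred n j)%:R - ((i:nat) == j.+1)%:R.
Proof.
rewrite mxE /fedge /ppred.
have Hi := ltn_ord i; have Hj := ltn_ord j.
case: (nat_of_ord j =P 0%N); intro; do ![case: eqP; intro]; rewrite /= ?mulr0n ?mulr1n ?subr0 ?sub0r //; exfalso; simpl in *; lia.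
Qed.
End Conc.

Section Conc2.
Variable F : fieldType.

Lemma parity_gen (g : nat -> F) n :
  (forall k, (k.+2 < n)%N -> g k = g k.+2) -> forall k, (k < n)%N -> g k = g (odd k).
Proof.
move=> Hs k; elim: k {-2}k (leqnn k) => [|m IH] k.
  by rewrite leqn0 => /eqP ->.
rewrite leq_eqVlt => /orP[/eqP ->|]; last by move=> Hk; apply: IH.
case: m IH => [|m] IH Hn //.
by rewrite -Hs // IH //= ?negbK //; lia.
Qed.

Lemma Uv_ord n (u : 'rV[F]_n) (i : 'I_n) : Uv u i = u 0 i.
Proof. by rewrite (Uv_lt u (ltn_ord i)); congr (u 0 _); apply: val_inj. Qed.

Lemma cond_of (n : nat) (a : 'M[F]_n) (k1 k2 : nat -> nat) (u : 'rV[F]_n) :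
  (forall i j : 'I_n, a i j = ((i:nat) == k1 j)%:R - ((i:nat) == k2 j)%:R) ->
  u *m a = 0 -> forall j, (j < n)%N -> Uv u (k1 j) = Uv u (k2 j).
Proof.
move=> Ha Hu j Hj; have := congr1 (fun M : 'rV[F]_n => M 0 (Ordinal Hj)) Hu.
by rewrite (mulU _ (Ha ^~ (Ordinal Hj))) mxE => /eqP; rewrite subr_eq0 => /eqP.
Qed.

Lemma cyc_ker n : (3 <= n)%N ->
  \rank (kermx (@Aas F _ (fedge (f:=Cyc n)))) = if odd n then 1%N else 2%N.
Proof.
move=> H3.
have Ha := @cyc_entry F n H3.
have Hcp j : (j < n)%N -> (cpred n j < n)%N by rewrite /cpred; case: ifP => /eqP ?; lia.
have Hcs j : (j < n)%N -> (csucc n j < n)%N by rewrite /csucc; case: ifP => /eqP ?; lia.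
have Hpar : forall u : 'rV[F]_n, u *m Aas F (fedge (f:=Cyc n)) = 0 ->
    (forall k, (k < n)%N -> Uv u k = Uv u (odd k)) /\ Uv u (n - 1) = Uv u 1.
  move=> u Hu; have Hc := cond_of Ha Hu; split.
    apply: parity_gen => k Hk; have := Hc k.+1 (ltnW Hk).
    by rewrite /cpred /csucc /= subn1 /=; case: eqP => // ?; lia.
  have := Hc 0%N (ltnW (ltnW H3)); rewrite /cpred /csucc /=.
  by case: eqP => // ?; lia.
case: ifP => Hodd.
  pose V := \row_(j < n) (1 : F).
  rewrite (@ker_rank_gen _ _ _ _ V).
  - rewrite rank_rV; suff -> : V != 0 by [].
    apply/eqP => /rowP /(_ (Ordinal (ltnW (ltnW H3)))).
    by rewrite !mxE; apply/eqP; exact: oner_neq0.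
  - move=> u Hu; have [Hp Hw] := Hpar u Hu.
    have -> : u = Uv u 0 *: V.
      apply/rowP => j; rewrite !mxE mulr1 -(Uv_ord u j) Hp //.
      have H1 : Uv u 1 = Uv u 0.
        rewrite -Hw Hp; last lia.
        by rewrite (_ : odd (n - 1) = false) //; lia.
      by case: (odd j).
    by rewrite scalemx_sub.
  - apply/rowP => j; rewrite (mulU _ (Ha ^~ j)) /V !(@Uv_row F n (fun _ => (1:F))) !mxE.
    by rewrite Hcp ?Hcs // subrr.
pose V := \matrix_(r < 2, j < n) ((odd j == odd r)%:R : F).
have rowV (r : 'I_2) : row r V = \row_(j < n) ((odd j == odd r)%:R : F).
  by apply/rowP => j; rewrite !mxE.
rewrite (@ker_rank_gen _ _ _ _ V).
- apply/eqP; rewrite eqn_leq rank_leq_row /=.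
  pose W := \matrix_(i < n, k < 2) (((i:nat) == k)%:R : F).
  have HVW : V *m W = 1%:M.
    apply/matrixP => r k; rewrite !mxE.
    have Hk : (k < n)%N by move: (ltn_ord k); lia.
    rewrite (bigD1 (Ordinal Hk)) //= big1 ?addr0; last first.
      move=> i; rewrite -val_eqE /= => /negbTE Hi; by rewrite !mxE Hi mulr0.
    rewrite !mxE eqxx mulr1.
    by case: r => [[|[|r]] Hr] //; case: k Hk => [[|[|k]] Hk'] //.
  by have := mxrankM_maxl V W; rewrite HVW mxrank1.
- move=> u Hu; have [Hp Hw] := Hpar u Hu.
  pose w := \row_(r < 2) Uv u r.
  have -> : u = w *m V.
    apply/rowP => j; rewrite !mxE !big_ord_recr big_ord0 /= !mxE add0r.
    rewrite -(Uv_ord u j) Hp //.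
    by case: (odd j); rewrite /= ?mulr1 ?mulr0 ?addr0 ?add0r.
  exact: submxMl.
- apply/row_matrixP => r; rewrite row_mul row0 rowV.
  apply/rowP => j; rewrite (mulU _ (Ha ^~ j)) !(@Uv_row F n (fun j => (odd j == odd r)%:R)) !mxE.
  rewrite Hcp ?Hcs // (_ : odd (cpred n j) = odd (csucc n j)) ?subrr //.
  move: (ltn_ord j); rewrite /cpred /csucc; case: ifP => /eqP ?; case: ifP => /eqP ?; lia.
Qed.
End Conc2.

Section Conc3.
Variable F : fieldType.

Lemma pth_ker n : (2 <= n)%N ->
  \rank (kermx (@Aas F _ (fedge (f:=Pth n)))) = if odd n then 1%N else 0%N.
Proof.
move=> H2.
have Ha := @pth_entry F n.
have Hpar : forall u : 'rV[F]_n, u *m Aas F (fedge (f:=Pth n)) = 0 ->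
    (forall k, (k < n)%N -> Uv u k = Uv u (odd k)) /\ Uv u 1 = 0 /\ Uv u (n - 2) = 0.
  move=> u Hu; have Hc := cond_of Ha Hu; split; [|split].
  - apply: parity_gen => k Hk; have := Hc k.+1 (ltnW Hk).
    by rewrite /ppred /= subn1.
  - have := Hc 0%N (ltnW H2); rewrite /ppred /= => <-.
    by rewrite Uv_out.
  - have := Hc (n - 1)%N ltac:(lia); rewrite /ppred.
    case: eqP => ?; first lia.
    rewrite (_ : (n - 1).+1 = n)%N; last lia.
    by rewrite (Uv_out u (leqnn n)) (_ : (n - 1 - 1 = n - 2)%N) //; lia.
case: ifP => Hodd.
  pose V := \row_(j < n) ((~~ odd j)%:R : F).
  rewrite (@ker_rank_gen _ _ _ _ V).
  - rewrite rank_rV; suff -> : V != 0 by [].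
    apply/eqP => /rowP /(_ (Ordinal (ltnW H2))).
    by rewrite !mxE; apply/eqP; exact: oner_neq0.
  - move=> u Hu; have [Hp [H1 _]] := Hpar u Hu.
    have -> : u = Uv u 0 *: V.
      apply/rowP => j; rewrite !mxE -(Uv_ord u j) Hp //.
      by case: (odd j); rewrite /= ?H1 ?mulr0 ?mulr1.
    by rewrite scalemx_sub.
  - apply/rowP => j; rewrite (mulU _ (Ha ^~ j)) /V.
    rewrite !(@Uv_row F n (fun j => (~~ odd j)%:R)) !mxE /ppred.
    have Hj := ltn_ord j.
    case: (nat_of_ord j =P 0%N) => [->|Hj0] /=.
      by rewrite ltnn H2 subrr.
    rewrite (_ : (j - 1 < n)%N = true); last lia.
    case: (ltnP j.+1 n) => Hs.
      by rewrite (_ : odd (j - 1) = odd j.+1) ?subrr //; lia.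
    by rewrite (_ : odd (j - 1) = true) ?subrr //; lia.
pose V := (0 : 'rV[F]_n).
rewrite (@ker_rank_gen _ _ _ _ V) ?mxrank0 //.
- move=> u Hu; have [Hp [H1 H2']] := Hpar u Hu.
  have -> : u = 0.
    apply/rowP => j; rewrite !mxE -(Uv_ord u j) Hp //.
    case: (odd j); rewrite /= ?H1 //.
    rewrite -H2' [Uv u (n - 2)]Hp; last lia.
    by rewrite (_ : odd (n - 2) = false) //; lia.
  exact: sub0mx.
- exact: mul0mx.
Qed.
End Conc3.

Lemma Aas_anti (F : fieldType) f : valid_factor f ->
  (Aas F (fedge (f:=f)))^T = - Aas F (fedge (f:=f)).
Proof.
case: f => n /= Hv; apply/matrixP => i j; rewrite !mxE /fedge ?modS //;
  have Hi := ltn_ord i; have Hj := ltn_ord j.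
  case: (i.+1 =P n); intro; case: (j.+1 =P n); intro;
  do ![case: eqP; intro]; rewrite /= ?opprK ?oppr0 //; exfalso; simpl in *; lia.
do ![case: eqP; intro]; rewrite /= ?opprK ?oppr0 //; exfalso; simpl in *; lia.
Qed.

Lemma Aas_re (C : numClosedFieldType) f :
  map_mx (@Num.conj C) (Aas C (fedge (f:=f))) = Aas C (fedge (f:=f)).
Proof.
apply/matrixP => i j; rewrite !mxE.
case: ifP => _; first exact: (rmorph1 Num.Def.conjC).
case: ifP => _; first exact: (rmorphN1 Num.Def.conjC).
exact: (rmorph0 Num.Def.conjC).
Qed.

Definition kd (f : factor) : nat :=
  match f with Cyc n => if odd n then 1%N else 2%N | Pth n => if odd n then 1%N else 0%N end.

Lemma ker_kd (F : fieldType) f : valid_factor f ->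
  \rank (kermx (Aas F (fedge (f:=f)))) = kd f.
Proof. by case: f => n /= Hv; [exact: cyc_ker | exact: pth_ker]. Qed.

Lemma trmx_sum (F : fieldType) k (I : finType) (A : I -> 'M[F]_k) :
  (\sum_i A i)^T = \sum_i (A i)^T.
Proof.
apply/matrixP => i j; rewrite !mxE !summxE; apply: eq_bigr => x _; by rewrite mxE.
Qed.

Lemma trmxD' (F : fieldType) m k (A B : 'M[F]_(m,k)) : (A + B)^T = A^T + B^T.
Proof. by apply/matrixP => i j; rewrite !mxE. Qed.

Lemma tensmxNr' (F : fieldType) m k p q (A : 'M[F]_(m,k)) (M : 'M[F]_(p,q)) :
  M *t (- A) = - (M *t A).
Proof. by apply/matrixP => i j; rewrite !mxE mulrN. Qed.

Unset Implicit Arguments.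

Theorem mainTheorem7 (R : realType) (D r : nat) (G : 'I_D -> factor)
    (gam : 'I_D -> 'M[R[i]]_r) :
  (forall mu, valid_factor (G mu)) ->
  clifford gam ->
  let c_even := #|[pred mu : 'I_D | is_even_cycle (G mu)]| in
  let no_even_path := [forall mu : 'I_D, ~~ is_even_path (G mu)] in
  dimker (Dop G gam) = (if no_even_path then r * 2 ^ c_even else 0)%N /\
  (no_even_path -> (r <= dimker (Dop G gam))%N).
Proof.
move=> Hv Hc c_even no_even_path.
pose a := fun nu => Aas R[i] (fedge (f:=G nu)).
pose h := fun mu => - (gam mu)^T.
pose l := rev (enum 'I_D).
have Hl : uniq l by rewrite rev_uniq enum_uniq.
have Hall : forall mu, mu \in l by move=> mu; rewrite mem_rev mem_enum.
have Ha : forall nu, (a nu)^T = - a nu by move=> nu; apply: Aas_anti.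
have Hr : forall nu, map_mx (@Num.conj R[i]) (a nu) = a nu by move=> nu; apply: Aas_re.
have Hh : clifford h.
  move=> mu nu; rewrite /h !mulNmx !mulmxN !opprK -!trmx_mul -trmxD'.
  by rewrite addrC Hc tr_scalar_mx eq_sym.
have E : (Dop G gam)^T = \sum_mu kron (upd mu a) l *t h mu.
  rewrite /Dop trmx_sum; apply: eq_bigr => mu _.
  rewrite trmx_tens.
  have := Am_tr Hl Hall Ha mu; rewrite /= => ->.
  by rewrite tensmxNl /h tensmxNr'.
have Hdim : dimker (Dop G gam) = (\prod_(nu < D) kd (G nu) * r)%N.
  rewrite /dimker E (gen_rank Hl Hall Ha Hr Hh) /l big_rev big_enum.
  congr (_ * _)%N; apply: eq_big => [nu|nu _]; last by rewrite ker_kd.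
  by [].
have Hprod : (\prod_(nu < D) kd (G nu) = if no_even_path then 2 ^ c_even else 0)%N.
  case: ifP => Hne.
    rewrite (eq_bigr (fun nu => if is_even_cycle (G nu) then 2 else 1)%N); last first.
      move=> nu _; move/forallP: Hne => /(_ nu); case: (G nu) => n /=.
        by case: (odd n).
      by case: (odd n).
    by rewrite -big_mkcond /= prod_nat_const.
  move/negbT: Hne; rewrite negb_forall => /existsP[nu]; rewrite negbK => Hnu.
  rewrite (bigD1 nu) //= (_ : kd (G nu) = 0%N) //.
  by move: Hnu; case: (G nu) => n //= /negbTE ->.
rewrite Hdim Hprod; split.
  by case: ifP => _; [rewrite mulnC | rewrite mul0n].
by move=> ->; rewrite mulnC leq_pmulr // expn_gt0.
Qed.
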